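(* Let $\mathbf w=(w_1,\dots,w_n)$ be weights with $w_i\ge0$, $\sum_iw_i=1$, and suppose $w_i=s_i/d$ with $s_i\in\mathbb Z_{\ge0}$ and $d\in\mathbb Z_{>0}$. Then for all $\mathbf r=(r_1,\dots,r_n)\in[0,1]^n$, $$\mu_{\mathbf w}(\mathbf r)=\operatorname{median}\big(\underbrace{r_1,\dots,r_1}_{s_1},\dots,\underbrace{r_n,\dots,r_n}_{s_n},0,\tfrac1d,\tfrac2d,\dots,1-\tfrac1d,1\big),$$ where $\mu_{\mathbf w}(\mathbf r):=\sup\{y\in[0,1]:\sum_{i:\,r_i\ge y}w_i\ge y\}$.
   Context: The median of an odd number $2d+1$ of real numbers (here $\sum_i s_i=d$ entries from $\mathbf r$ plus the $d+1$ grid points) is its $(d+1)$-th smallest element. *)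

(* Defs.v *)
From HB Require Import structures.
From mathcomp Require Import all_boot all_order all_algebra.
From mathcomp Require Import all_classical all_reals.
Set Implicit Arguments. Unset Strict Implicit. Unset Printing Implicit Defensive.
Import Order.TTheory GRing.Theory Num.Theory.
Local Open Scope ring_scope.
Local Open Scope classical_set_scope.

Definition mu_w (R : realType) (n : nat) (w r : 'I_n -> R) : R :=
  sup [set y : R | 0 <= y <= 1 /\ y <= \sum_(i < n | y <= r i) w i].

Definition median (R : realType) (l : seq R) : R :=
  nth 0 (sort <=%R l) (size l)./2.

Definition median_list (R : realType) (n : nat) (s : 'I_n -> nat) (d : nat)
  (r : 'I_n -> R) : seq R :=
  flatten [seq nseq (s i) (r i) | i <- enum 'I_n] ++
  [seq (k%:R / d%:R) | k <- iota 0 d.+1].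

(* Main.v *)
Require Import Defs.
From HB Require Import structures.
From mathcomp Require Import all_boot all_order all_algebra.
From mathcomp Require Import all_classical all_reals.
From mathcomp Require Import lra zify.
Import Order.TTheory GRing.Theory Num.Theory.
Local Open Scope ring_scope.
Lemma iotaS0 N : iota 0 N.+1 = iota 0 N ++ [:: N].
Proof. by rewrite -addn1 iotaD add0n. Qed.

Lemma grid_ge (R : realType) N (x : R) : 0 <= x -> x <= N%:R ->
  (count (fun k : nat => x <= k%:R) (iota 0 N.+1))%:R + x <= N.+1%:R.
Proof.
elim: N x => [|N IH] x x0 xN.
  have -> : x = 0 by apply/le_anti; rewrite x0 xN.
  by rewrite /= lexx addr0.
rewrite iotaS0 count_cat; set c := count _ (iota 0 N.+1); rewrite /= addn0 natrD.
have [xle|xgt] := leP x N%:R.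
  have -> : x <= N.+1%:R by apply: (le_trans xle); rewrite ler_nat.
  have h := IH x x0 xle; rewrite -/c in h; rewrite -!natr1 /= -?natr1 in h *; lra.
have -> : c = 0%N.
  rewrite /c (eq_in_count (a2 := pred0)) ?count_pred0 // => k.
  rewrite mem_iota /= add0n ltnS => kN; apply/negbTE; rewrite -ltNge.
  by apply: le_lt_trans xgt; rewrite ler_nat.
rewrite add0r; move: xN; rewrite -!natr1 => h; rewrite h /=; lra.
Qed.

Lemma grid_gt (R : realType) N (x : R) : 0 <= x -> x <= N%:R ->
  N%:R <= (count (fun k : nat => x < k%:R) (iota 0 N.+1))%:R + x.
Proof.
elim: N x => [|N IH] x x0 xN.
  by rewrite /= addn0; case: (_ < _); rewrite /=; lra.
rewrite iotaS0 count_cat; set c := count _ (iota 0 N.+1); rewrite /= addn0 natrD.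
have [xle|xgt] := leP x N%:R.
  have := IH x x0 xle.
  have : x < N.+1%:R by apply: le_lt_trans xle _; rewrite ltr_nat.
  move=> ->; have h := IH x x0 xle; rewrite -/c in h; rewrite -!natr1 /= in h *; lra.
have : 0 <= c%:R :> R by [].
move: xN; rewrite -natr1 => h1 h2; case: (ltP x (N%:R + 1)) => h3; rewrite /=; lra.
Qed.
Lemma med_count (R : realType) (L : seq R) d : size L = (d + d).+1 ->
  (d.+1 <= count (fun x : R => (nth 0 (sort <=%R L) d <= x)%R) L)%N /\
  (count (fun x : R => (nth 0 (sort <=%R L) d < x)%R) L <= d)%N.
Proof.
move=> sL; set l := sort <=%R L; set m := nth 0 l d.
have pl : perm_eq l L by rewrite perm_sort.
have szl : size l = (d + d).+1 by rewrite (perm_size pl).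
have srt : sorted <=%R l by apply: sort_sorted; exact: le_total.
have hom := sorted_leq_nth (@le_trans _ R) (@lexx _ R) 0 srt.
have c1 : (d.+1 <= count (fun x => (m <= x)%R) l)%N.
  rewrite -(cat_take_drop d l) count_cat.
  have -> : count (fun x => m <= x) (drop d l) = size (drop d l).
    apply: eqP; rewrite -all_count; apply/(all_nthP 0) => i.
    rewrite size_drop [size _]szl nth_drop => hi; apply: hom; rewrite ?inE ?[size _]szl //; lia.
  rewrite size_drop [size _]szl; lia.
have c2 : (d.+1 <= count (fun x => (x <= m)%R) l)%N.
  rewrite -(cat_take_drop d.+1 l) count_cat.
  have -> : count (fun x => x <= m) (take d.+1 l) = size (take d.+1 l).
    apply: eqP; rewrite -all_count; apply/(all_nthP 0) => i.
    rewrite size_takel; last by rewrite [size _]szl; lia.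
    move=> hi; rewrite nth_take //; apply: hom; rewrite ?inE ?[size _]szl //; lia.
  rewrite size_takel; last by rewrite [size _]szl; lia.
  lia.
move/permP: pl => pl.
rewrite -!pl; split => //.
have := count_predC (fun x => x <= m) l.
have e : count (predC (fun x => x <= m)) l = count (fun x => m < x) l.
  by apply: eq_count => x; rewrite /= ltNge.
rewrite e [size _]szl; move: c2; set a := count _ l; set b := count _ l.
clearbody a b; lia.
Qed.

Lemma count_flat (R : realType) n (s : 'I_n -> nat) (r : 'I_n -> R) (P : pred R) :
  count P (flatten [seq nseq (s i) (r i) | i <- enum 'I_n]) =
  (\sum_(i < n) P (r i) * s i)%N.
Proof.
rewrite count_flatten sumnE !big_map; apply: eq_bigr => i _.
by rewrite count_nseq.
Qed.

Lemma sum_real (R : realType) n (s : 'I_n -> nat) (w r : 'I_n -> R) d (P : pred R) :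
  (0 < d)%N -> (forall i, w i = (s i)%:R / d%:R) ->
  ((\sum_(i < n) P (r i) * s i)%N)%:R = d%:R * \sum_(i < n | P (r i)) w i.
Proof.
move=> d0 hw; rewrite natr_sum mulr_sumr [RHS]big_mkcond /=; apply: eq_bigr => i _.
have D0 : d%:R != 0 :> R by rewrite pnatr_eq0 -lt0n.
case: (P (r i)); rewrite /= ?hw ?mul1n ?mul0n //.
by rewrite mulrC divfK.
Qed.

Theorem mainTheorem11 (R : realType) (n : nat) (w : 'I_n -> R)
  (s : 'I_n -> nat) (d : nat) (r : 'I_n -> R) :
  (0 < d)%N ->
  (forall i, 0 <= w i) ->
  \sum_(i < n) w i = 1 ->
  (forall i, w i = (s i)%:R / d%:R) ->
  (forall i, 0 <= r i <= 1) ->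
  mu_w w r = median (median_list s d r).
Proof.
move=> d0 w0 w1 hw r01.
set D : R := d%:R.
have D0 : 0 < D by rewrite ltr0n.
have sumS : (\sum_(i < n) s i)%N = d.
  apply/eqP; rewrite -(eqr_nat R).
  have := @sum_real R n s w r d predT d0 hw.
  move=> h.
  have e : (\sum_(i < n) predT (r i) * s i)%N = (\sum_(i < n) s i)%N.
    by apply: eq_bigr => i _; rewrite mul1n.
  by rewrite -e h (eq_bigl xpredT) // w1 mulr1.
set L := median_list s d r.
have sL : size L = (d + d).+1.
  rewrite /L /median_list size_cat -count_predT count_flat size_map size_iota.
  under eq_bigr do rewrite mul1n.
  by rewrite sumS addnS.
have medE : median L = nth 0 (sort <=%R L) d.
  by rewrite /median sL addnn -[(d.*2).+1]/(true + d.*2)%N half_bit_double.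
set m := nth 0 (sort <=%R L) d.
have mem01 : forall x, x \in L -> 0 <= x <= 1.
  move=> x; rewrite mem_cat => /orP [/flattenP [t /mapP [i _ ->]]|].
    by rewrite mem_nseq => /andP [_ /eqP ->].
  move=> /mapP [k]; rewrite mem_iota add0n ltnS => /andP [_ kd] ->.
  rewrite divr_ge0 ?ler0n //= ler_pdivrMr // mul1r ler_nat //.
have m01 : 0 <= m <= 1.
  by apply: mem01; rewrite -(mem_sort <=%R) mem_nth // size_sort sL; lia.
have /andP [m0 m1] := m01.
have mD0 : 0 <= m * D by rewrite mulr_ge0 // ltW.
have mDd : m * D <= d%:R by rewrite -[X in _ <= X]mul1r ler_pM2r.
have [c1 c2] := @med_count R L d sL; rewrite -/m in c1 c2.
rewrite /L /median_list !count_cat !count_flat !count_map in c1 c2.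
have e1 : count (preim (fun k : nat => k%:R / D) (fun x => m <= x)) (iota 0 d.+1)
   = count (fun k : nat => m * D <= k%:R) (iota 0 d.+1).
  by apply: eq_count => k; rewrite /= ler_pdivlMr.
have e2 : count (preim (fun k : nat => k%:R / D) (fun x => m < x)) (iota 0 d.+1)
   = count (fun k : nat => m * D < k%:R) (iota 0 d.+1).
  by apply: eq_count => k; rewrite /= ltr_pdivlMr.
rewrite e1 in c1; rewrite e2 in c2.
have g1 := @grid_ge R d _ mD0 mDd; have g2 := @grid_gt R d _ mD0 mDd.
move: g1 g2 c1 c2.
set cg1 := count (fun k : nat => m * D <= k%:R) (iota 0 d.+1).
set cg2 := count (fun k : nat => m * D < k%:R) (iota 0 d.+1).
clearbody cg1 cg2 => g1 g2 c1 c2.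
move: c1 c2; rewrite -(ler_nat R) -[(_ <= d)%N](ler_nat R) !natrD.
rewrite !(@sum_real R n s w r d _ d0 hw) -/D.
set F := \sum_(i < n | _) w i; set G := \sum_(i < n | _) w i.
move=> c1 c2.
have hF : D * m <= D * F by move: c1 g1; rewrite -natr1; lra.
have hG : D * G <= D * m by move: c2 g2; lra.
rewrite ler_pM2l // in hF; rewrite ler_pM2l // in hG.
rewrite medE -/m /mu_w.
set A := (X in sup X).
have mA : A m by split => //.
have ubm : ubound A m.
  move=> y [/andP [y0 y1] yF]; rewrite leNgt; apply/negP => my.
  suff : \sum_(i < n | y <= r i) w i <= G by move=> h; lra.
  rewrite /G !(big_mkcond (fun i => _ <= r i)) (big_mkcond (fun i => m < r i)) /=.
  apply: ler_sum => i _; case: ifP => // yr.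
  by rewrite (lt_le_trans my yr).
  case: ifP => //.
apply/le_anti/andP; split.
  by apply: ge_sup => //; exists m.
by apply: sup_upper_bound => //; split; [exists m | exists m].
Qed.
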